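(* Let $K,L$ be Markov kernels on a measurable space $S$, and let $(K^{(n)})_{n\ge2}$ and $(L^{(n)})_{n\ge2}$ be consistent extensions of $K$ and $L$ respectively. Then $(K^{(n)}L^{(n)})_{n\ge2}$ is a consistent extension of $KL$.
   Context: Composition: $(KL)(x,B)=\int L(y,B)K(x,dy)$. For $i_1,\dots,i_k\in\{1,\dots,n\}$ (repetitions allowed), $\pi^n_{i_1,\dots,i_k}(x_1,\dots,x_n)=(x_{i_1},\dots,x_{i_k})$. A family $(K^{(n)})_{n\ge1}$, $K^{(n)}$ a Markov kernel on $S^n$ with the product $\sigma$-algebra, is consistent if $K^{(n)}(\mathbf{x},(\pi^n_{i_1,\dots,i_k})^{-1}(B))=K^{(k)}(\pi^n_{i_1,\dots,i_k}(\mathbf{x}),B)$ for all $1\le k\le n$, all $i_1,\dots,i_k$, all $\mathbf{x}\in S^n$ and measurable $B\subset S^k$. A family $(K^{(n)})_{n\ge2}$ is a consistent extension of a kernel $K$ on $S$ if $(K^{(n)})_{n\ge1}$ with $K^{(1)}=K$ is consistent. *)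

(* Defs.v *)
From HB Require Import structures.
From mathcomp Require Import all_boot all_order all_algebra.
From mathcomp Require Import all_classical all_reals all_analysis.
Set Implicit Arguments. Unset Strict Implicit. Unset Printing Implicit Defensive.
Import Order.TTheory GRing.Theory Num.Theory.
Local Open Scope classical_set_scope.
Local Open Scope ring_scope.
Local Open Scope ereal_scope.

Section Defs.
Context {R : realType} {d : measure_display} {S : measurableType d}.

(* S^n is modelled as n.-tuple S, with the library's product sigma-algebra
   (generated by the coordinate projections). *)

Definition proj (n k : nat) (i : k.-tuple 'I_n) (x : n.-tuple S) : k.-tuple S :=
  map_tuple (tnth x) i.

Definition kcompose {d' : measure_display} {X : measurableType d'}
    (k l : X -> {measure set X -> \bar R}) : X -> set X -> \bar R :=
  fun x B => \int[k x]_y l y B.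

Definition consistent (F : forall n, n.-tuple S -> set (n.-tuple S) -> \bar R) :=
  forall (n k : nat), (1 <= k <= n)%N ->
  forall (i : k.-tuple 'I_n) (x : n.-tuple S) (B : set (k.-tuple S)),
    measurable B -> F n x (proj i @^-1` B) = F k (proj i x) B.

Definition lift1 (k : S -> set S -> \bar R) : 1.-tuple S -> set (1.-tuple S) -> \bar R :=
  fun x B => k (thead x) [set s | B [tuple s]].

(* the family (F^(n))_{n>=1} with F^(1) = k and F^(n+2) = F n;
   the value at n = 0 is irrelevant (never used by [consistent]) *)
Definition extfam (k : S -> set S -> \bar R)
    (F : forall n, n.+2.-tuple S -> set (n.+2.-tuple S) -> \bar R) :
    forall n, n.-tuple S -> set (n.-tuple S) -> \bar R :=
  fun n => match n as n0 return n0.-tuple S -> set (n0.-tuple S) -> \bar R with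
           | 0%N => fun _ _ => 0
           | 1%N => lift1 k
           | m.+2 => F m
           end.

Definition consistent_extension (k : S -> set S -> \bar R)
    (F : forall n, n.+2.-tuple S -> set (n.+2.-tuple S) -> \bar R) :=
  consistent (extfam k F).

Definition is_markov_kernel {d' : measure_display} {X : measurableType d'}
    (f : X -> set X -> \bar R) :=
  exists P : R.-pker X ~> X, forall x B, measurable B -> P x B = f x B.

End Defs.

(* Main.v *)
Require Import Defs.
From HB Require Import structures.
From mathcomp Require Import all_boot all_order all_algebra.
From mathcomp Require Import all_classical all_reals all_analysis.
From mathcomp Require Import measurable_realfun.
Local Open Scope classical_set_scope.
Local Open Scope ring_scope.
Local Open Scope ereal_scope.

Lemma push_eq d1 d2 (X : measurableType d1) (Y : measurableType d2) (R : realType)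
  (mu : {measure set X -> \bar R}) (nu : {measure set Y -> \bar R}) (f : X -> Y)
  (mf : measurable_fun setT f) (g : Y -> \bar R) (mg : measurable_fun [set: Y] g)
  (g0 : forall y, 0 <= g y)
  (h : forall A, measurable A -> mu (f @^-1` A) = nu A) :
  \int[mu]_x g (f x) = \int[nu]_y g y.
Proof.
rewrite (eq_measure_integral (pushforward mu f)); last first.
  by move=> A mA _ /=; rewrite -h.
by rewrite [RHS](ge0_integral_pushforward mf) //.
Qed.

Section pk.
Context d (T : measurableType d) (R : realType) (k1 k2 : R.-pker T ~> T).
Let prob x : mkcomp_noparam k1 k2 x setT = 1.
Proof.
rewrite /= /kcomp_noparam.
under eq_integral do rewrite prob_kernel.
by rewrite integral_cst // mul1e prob_kernel.
Qed.
HB.instance Definition _ := Kernel_isProbability.Build _ _ _ _ _ (mkcomp_noparam k1 k2) prob.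
End pk.

Lemma markov_comp d (T : measurableType d) (R : realType) (k1 k2 : R.-pker T ~> T) :
  is_markov_kernel (kcompose k1 k2).
Proof. by exists (mkcomp_noparam k1 k2). Qed.

Lemma mproj d (S : measurableType d) n k (i : k.-tuple 'I_n) :
  measurable_fun setT (@Defs.proj d S n k i).
Proof.
apply/measurable_fun_tnthP => j.
rewrite (_ : _ \o _ = (fun y : n.-tuple S => tnth y (tnth i j))); first exact: measurable_tnth.
by apply/funext => y; rewrite /= /Defs.proj tnth_map.
Qed.

Lemma mthead d (S : measurableType d) :
  measurable_fun setT (@thead 0 S).
Proof. exact: (measurable_tnth ord0). Qed.

Lemma mtup d (S : measurableType d) :
  measurable_fun setT (fun s : S => [tuple s]).
Proof.
apply/measurable_fun_tnthP => j.
rewrite (_ : _ \o _ = id); first exact: measurable_id.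
by apply/funext => y; rewrite /= (ord1 j).
Qed.

Theorem lemma6p2 (R : realType) (d : measure_display) (S : measurableType d)
  (K L : R.-pker S ~> S)
  (Kn Ln : forall n : nat, R.-pker (n.+2.-tuple S) ~> (n.+2.-tuple S)) :
  consistent_extension (fun x B => K x B) (fun n x B => Kn n x B) ->
  consistent_extension (fun x B => L x B) (fun n x B => Ln n x B) ->
  (forall n : nat, is_markov_kernel (kcompose (Kn n) (Ln n))) /\
  is_markov_kernel (kcompose K L) /\
  consistent_extension (kcompose K L) (fun n => kcompose (Kn n) (Ln n)).
Proof.
move=> HK HL; split; first by move=> n; exact: markov_comp.
split; first exact: markov_comp.
move=> n k /andP[k1 kn] i x B mB.
case: n i x kn => [|[|m]] i x kn.
- by move: (leq_trans k1 kn).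
- case: k k1 i B mB kn => [|[|k']] k1 i B mB kn //.
  have e : forall y : 1.-tuple S, Defs.proj i y = y.
    move=> y; apply: eq_from_tnth => j.
    by rewrite /Defs.proj tnth_map (ord1 j) (ord1 (tnth i ord0)).
  rewrite e (_ : Defs.proj i @^-1` B = B) //.
  by apply/funext => y; rewrite /preimage /=; congr B; apply: e.
case: k k1 i B mB kn => [|[|m']] k1 i B mB kn //.
- rewrite /= /lift1 /kcompose.
  have mtB : measurable [set s : S | B [tuple s]].
    by have := mtup d S measurableT _ mB; rewrite setTI.
  transitivity (\int[Kn m x]_y L (thead (Defs.proj i y)) [set s | B [tuple s]]).
    by apply: eq_integral => y _; exact: (HL m.+2 1%N isT i y B mB).
  apply: (@push_eq _ _ _ _ R _ _ (fun y => thead (Defs.proj i y)) _ (fun s => L s [set s | B [tuple s]])).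
  - exact: (measurableT_comp (mthead d S) (mproj d S _ _ i)).
  - exact: measurable_kernel.
  - by move=> s; exact: measure_ge0.
  - move=> A mA.
    have mA' : measurable (@thead 0 S @^-1` A).
      by have := mthead d S measurableT _ mA; rewrite setTI.
    exact: (HK m.+2 1%N isT i x _ mA').
- rewrite /= /kcompose.
  transitivity (\int[Kn m x]_y Ln m' (Defs.proj i y) B).
    by apply: eq_integral => y _; exact: (HL m.+2 m'.+2 (introT andP (conj k1 kn)) i y B mB).
  apply: (@push_eq _ _ _ _ R _ _ (Defs.proj i) _ (fun z => Ln m' z B)).
  - exact: mproj.
  - exact: measurable_kernel.
  - by move=> s; exact: measure_ge0.
  - move=> A mA.
    exact: (HK m.+2 m'.+2 (introT andP (conj k1 kn)) i x _ mA).
Qed.
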